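(* Let $X$ be a directed graph, and let $X^0$ be the directed graph obtained from $X$ by adding an extra vertex $z$ and an edge from every vertex of $X^0$ to $z$. If $X$ is strongly $\delta$-hyperbolic then $X^0$ is strongly $\max(1,\delta)$-hyperbolic. Conversely, if $X^0$ is strongly $\delta$-hyperbolic then $X$ is strongly $\delta$-hyperbolic.
   Context: Directed graphs may have loops and multiple edges; $d(u,v)$ is the length of a shortest directed path from $u$ to $v$ ($\infty$ if none). Out-ball $\overrightarrow{\mathcal{B}}_r(x)=\{y : d(x,y)\le r\}$, in-ball $\overleftarrow{\mathcal{B}}_r(x)=\{y : d(y,x)\le r\}$, extended to sets by union. A path $[x_0,\dots,x_n]$ is a geodesic if $n=d(x_0,x_n)$. A directed geodesic triangle is an ordered triple $(p,q,r)$ of geodesics with the end of $p$ equal to the start of $q$ and $p\circ q$ having the same start and end as $r$; it is $\delta$-thin if every vertex of $r$ lies in $\overrightarrow{\mathcal{B}}_\delta(p)\cup\overleftarrow{\mathcal{B}}_\delta(q)$, every vertex of $p$ lies in $\overrightarrow{\mathcal{B}}_\delta(r)\cup\overleftarrow{\mathcal{B}}_\delta(q)$, and every vertex of $q$ lies in $\overrightarrow{\mathcal{B}}_\delta(p)\cup\overleftarrow{\mathcal{B}}_\delta(r)$. A directed graph is strongly $\delta$-hyperbolic if all its directed geodesic triangles are $\delta$-thin. *)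

(* Defs.v *)
From Stdlib Require Import Reals List.
Open Scope R_scope.

(* A directed graph (loops and multiple edges allowed; multiplicities are
   irrelevant for paths/distances) on a vertex type V, given by its
   adjacency relation: E x y means there is at least one edge x -> y. *)

(* A path [x0; x1; ...; xn] is represented by its start x0 and the list
   [x1; ...; xn]; its length is n = length xs, its end is last xs x0. *)
Fixpoint walk {V : Type} (E : V -> V -> Prop) (x : V) (xs : list V) : Prop :=
  match xs with
  | nil => True
  | y :: ys => E x y /\ walk E y ys
  end.

Definition path_end {V : Type} (x : V) (xs : list V) : V := last xs x.

Definition on_path {V : Type} (x : V) (xs : list V) (v : V) : Prop :=
  In v (x :: xs).

(* d(x,y) <= r   (d(x,y) = infinity if there is no directed path) *)
Definition dist_le {V : Type} (E : V -> V -> Prop) (x y : V) (r : R) : Prop :=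
  exists xs, walk E x xs /\ path_end x xs = y /\ INR (length xs) <= r.

Definition geodesic {V : Type} (E : V -> V -> Prop) (x : V) (xs : list V) : Prop :=
  walk E x xs /\
  forall ys, walk E x ys -> path_end x ys = path_end x xs ->
    (length xs <= length ys)%nat.

Definition in_out_ball_path {V : Type} (E : V -> V -> Prop) (r : R)
  (x : V) (xs : list V) (y : V) : Prop :=
  exists v, on_path x xs v /\ dist_le E v y r.

Definition in_in_ball_path {V : Type} (E : V -> V -> Prop) (r : R)
  (x : V) (xs : list V) (y : V) : Prop :=
  exists v, on_path x xs v /\ dist_le E y v r.

Definition geodesic_triangle {V : Type} (E : V -> V -> Prop)
  (p0 : V) (ps : list V) (q0 : V) (qs : list V) (r0 : V) (rs : list V) : Prop :=
  geodesic E p0 ps /\ geodesic E q0 qs /\ geodesic E r0 rs /\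
  path_end p0 ps = q0 /\ r0 = p0 /\ path_end r0 rs = path_end q0 qs.

Definition thin_triangle {V : Type} (E : V -> V -> Prop) (d : R)
  (p0 : V) (ps : list V) (q0 : V) (qs : list V) (r0 : V) (rs : list V) : Prop :=
  (forall v, on_path r0 rs v ->
     in_out_ball_path E d p0 ps v \/ in_in_ball_path E d q0 qs v) /\
  (forall v, on_path p0 ps v ->
     in_out_ball_path E d r0 rs v \/ in_in_ball_path E d q0 qs v) /\
  (forall v, on_path q0 qs v ->
     in_out_ball_path E d p0 ps v \/ in_in_ball_path E d r0 rs v).

Definition strongly_hyperbolic {V : Type} (E : V -> V -> Prop) (d : R) : Prop :=
  forall p0 ps q0 qs r0 rs,
    geodesic_triangle E p0 ps q0 qs r0 rs -> thin_triangle E d p0 ps q0 qs r0 rs.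

(* X^0: add a new vertex z (= None) and an edge from every vertex of X^0
   (including z itself) to z. *)
Definition cone_graph {V : Type} (E : V -> V -> Prop) : option V -> option V -> Prop :=
  fun a b =>
    match a, b with
    | Some u, Some v => E u v
    | _, None => True
    | None, Some _ => False
    end.

(* Main.v *)
Require Import Defs.
From Stdlib Require Import Reals List Lra Lia.
Open Scope R_scope.

Lemma path_end_cons {V : Type} (ys : list V) : forall x a, path_end x (a::ys) = path_end a ys.
Proof.
  unfold path_end. induction ys as [|b ys IH]; intros x a; [reflexivity|].
  change (last (b::ys) x = last (b::ys) a). rewrite !IH. reflexivity.
Qed.

Lemma walk_none {V : Type} (E : V -> V -> Prop) ys :
  walk (cone_graph E) None ys -> path_end None ys = None.
Proof.
  induction ys as [|a ys IH]; intros H; [reflexivity|].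
  destruct H as [H1 H2]. destruct a as [a|]; [destruct H1|].
  rewrite path_end_cons. auto.
Qed.

Lemma walk_some {V : Type} (E : V -> V -> Prop) ys : forall x,
  walk (cone_graph E) (Some x) ys -> path_end (Some x) ys <> None ->
  exists xs, ys = map Some xs /\ walk E x xs.
Proof.
  induction ys as [|a ys IH]; intros x H Hn.
  - exists nil; simpl; auto.
  - destruct H as [H1 H2]. rewrite path_end_cons in Hn.
    destruct a as [a|].
    + destruct (IH a H2 Hn) as [xs [-> Hw]]. exists (a::xs); simpl; auto.
    + exfalso. apply Hn. apply (walk_none E); auto.
Qed.

Lemma walk_map {V : Type} (E : V -> V -> Prop) xs : forall x,
  walk E x xs -> walk (cone_graph E) (Some x) (map Some xs).
Proof.
  induction xs as [|a xs IH]; intros x H; simpl; auto.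
  destruct H; split; auto.
Qed.

Lemma path_end_map {V : Type} (xs : list V) : forall x,
  path_end (Some x) (map Some xs) = Some (path_end x xs).
Proof.
  induction xs as [|a xs IH]; intros x; [reflexivity|].
  simpl map. rewrite !path_end_cons. auto.
Qed.

Lemma on_path_map {V : Type} (xs : list V) x w :
  on_path (Some x) (map Some xs) w -> exists w', w = Some w' /\ on_path x xs w'.
Proof.
  unfold on_path. change (Some x :: map Some xs) with (map Some (x::xs)).
  intros H. apply in_map_iff in H. destruct H as [w' [<- H]]. eauto.
Qed.

Lemma on_path_map' {V : Type} (xs : list V) x w :
  on_path x xs w -> on_path (Some x) (map Some xs) (Some w).
Proof.
  unfold on_path. change (Some x :: map Some xs) with (map Some (x::xs)).
  intros H. apply in_map; auto.
Qed.

Lemma dist_le_up {V : Type} (E : V -> V -> Prop) u v r :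
  dist_le E u v r -> dist_le (cone_graph E) (Some u) (Some v) r.
Proof.
  intros [xs [Hw [He Hl]]]. exists (map Some xs). split; [apply walk_map; auto|].
  rewrite path_end_map, He, length_map. auto.
Qed.

Lemma dist_le_down {V : Type} (E : V -> V -> Prop) u v r :
  dist_le (cone_graph E) (Some u) (Some v) r -> dist_le E u v r.
Proof.
  intros [ys [Hw [He Hl]]].
  destruct (walk_some E ys u Hw) as [xs [-> Hw']]. { rewrite He; discriminate. }
  exists xs. rewrite path_end_map in He. injection He as He.
  rewrite length_map in Hl. auto.
Qed.

Lemma dist_le_mono {V : Type} (E : V -> V -> Prop) u v r r' :
  dist_le E u v r -> r <= r' -> dist_le E u v r'.
Proof. intros [xs [A [B C]]] H. exists xs. repeat split; auto; lra. Qed.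

Lemma map_some_inj {V : Type} (xs : list V) : forall ys,
  map Some xs = map Some ys -> xs = ys.
Proof.
  induction xs as [|a xs IH]; intros [|b ys] H; simpl in H; try discriminate; auto.
  injection H as -> H. f_equal. auto.
Qed.

Lemma geod_up {V : Type} (E : V -> V -> Prop) x xs :
  geodesic E x xs -> geodesic (cone_graph E) (Some x) (map Some xs).
Proof.
  intros [Hw Hm]. split; [apply walk_map; auto|].
  intros ys Hy He. rewrite path_end_map in He.
  destruct (walk_some E ys x Hy) as [zs [-> Hz]]. { rewrite He; discriminate. }
  rewrite path_end_map in He. injection He as He. rewrite !length_map. auto.
Qed.

Lemma geod_down {V : Type} (E : V -> V -> Prop) x xs :
  geodesic (cone_graph E) (Some x) (map Some xs) -> geodesic E x xs.
Proof.
  intros [Hw Hm]. split.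
  - destruct (walk_some E _ x Hw) as [zs [Heq Hz]].
    { rewrite path_end_map; discriminate. }
    apply map_some_inj in Heq; subst; auto.
  - intros ys Hy He. specialize (Hm (map Some ys) (walk_map E ys x Hy)).
    rewrite !path_end_map, He, !length_map in Hm. auto.
Qed.

Lemma geod_none {V : Type} (E : V -> V -> Prop) qs :
  geodesic (cone_graph E) None qs -> qs = nil.
Proof.
  intros [Hw Hm]. specialize (Hm nil I). rewrite (walk_none E qs Hw) in Hm.
  specialize (Hm eq_refl). destruct qs; simpl in Hm; auto. lia.
Qed.

Lemma end_on_path {V : Type} (x : V) xs : on_path x xs (path_end x xs).
Proof.
  revert x; induction xs as [|a xs IH]; intros x; [left; reflexivity|].
  rewrite path_end_cons. right. apply IH.
Qed.

Lemma to_none {V : Type} (E : V -> V -> Prop) w d :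
  dist_le (cone_graph E) w None (Rmax 1 d).
Proof.
  exists (None :: nil). split; [destruct w; simpl; auto|].
  split; [reflexivity|]. simpl length. rewrite INR_1. apply Rmax_l.
Qed.

Lemma out_up {V : Type} (E : V -> V -> Prop) d d' x xs v :
  d <= d' -> in_out_ball_path E d x xs v ->
  in_out_ball_path (cone_graph E) d' (Some x) (map Some xs) (Some v).
Proof.
  intros Hd [w [Hw Hdw]]. exists (Some w). split; [apply on_path_map'; auto|].
  apply dist_le_up. eapply dist_le_mono; eauto.
Qed.

Lemma in_up {V : Type} (E : V -> V -> Prop) d d' x xs v :
  d <= d' -> in_in_ball_path E d x xs v ->
  in_in_ball_path (cone_graph E) d' (Some x) (map Some xs) (Some v).
Proof.
  intros Hd [w [Hw Hdw]]. exists (Some w). split; [apply on_path_map'; auto|].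
  apply dist_le_up. eapply dist_le_mono; eauto.
Qed.

Lemma out_down {V : Type} (E : V -> V -> Prop) d x xs v :
  in_out_ball_path (cone_graph E) d (Some x) (map Some xs) (Some v) ->
  in_out_ball_path E d x xs v.
Proof.
  intros [w [Hw Hdw]]. destruct (on_path_map xs x w Hw) as [w' [-> Hw']].
  exists w'. split; auto. apply dist_le_down; auto.
Qed.

Lemma in_down {V : Type} (E : V -> V -> Prop) d x xs v :
  in_in_ball_path (cone_graph E) d (Some x) (map Some xs) (Some v) ->
  in_in_ball_path E d x xs v.
Proof.
  intros [w [Hw Hdw]]. destruct (on_path_map xs x w Hw) as [w' [-> Hw']].
  exists w'. split; auto. apply dist_le_down; auto.
Qed.

Theorem proposition2p6 (V : Type) (E : V -> V -> Prop) (delta : R) :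
  (strongly_hyperbolic E delta ->
     strongly_hyperbolic (cone_graph E) (Rmax 1 delta)) /\
  (strongly_hyperbolic (cone_graph E) delta ->
     strongly_hyperbolic E delta).
Proof.
  split.
  - intros H p0 ps q0 qs r0 rs T.
    destruct T as [Gp [Gq [Gr [Epq [Er Eend]]]]].
    destruct (path_end r0 rs) as [y|] eqn:Ey.
    + destruct q0 as [q0'|].
      2:{ rewrite (walk_none E qs (proj1 Gq)) in Eend. discriminate. }
      destruct (walk_some E qs q0' (proj1 Gq)) as [qs' [-> _]]. { rewrite <- Eend; discriminate. }
      destruct p0 as [p0'|].
      2:{ rewrite (walk_none E ps (proj1 Gp)) in Epq. discriminate. }
      destruct (walk_some E ps p0' (proj1 Gp)) as [ps' [-> _]]. { rewrite Epq; discriminate. }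
      subst r0.
      destruct (walk_some E rs p0' (proj1 Gr)) as [rs' [-> _]]. { rewrite Ey; discriminate. }
      rewrite path_end_map in Epq. injection Epq as Epq.
      rewrite !path_end_map in Eend. injection Eend as Eend.
      assert (Hd : delta <= Rmax 1 delta) by apply Rmax_r.
      destruct (H p0' ps' q0' qs' p0' rs') as [T1 [T2 T3]].
      { rewrite path_end_map in Ey. injection Ey as Ey.
        split; [apply geod_down; auto|]. split; [apply geod_down; auto|].
        split; [apply geod_down; auto|]. repeat split; congruence. }
      repeat split; intros v Hv; destruct (on_path_map _ _ v Hv) as [v' [-> Hv']].
      * destruct (T1 v' Hv'); [left; eapply out_up|right; eapply in_up]; eauto.
      * destruct (T2 v' Hv'); [left; eapply out_up|right; eapply in_up]; eauto.
      * destruct (T3 v' Hv'); [left; eapply out_up|right; eapply in_up]; eauto.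
    + repeat split; intros v Hv; right.
      * exists (path_end q0 qs). split; [apply end_on_path|].
        rewrite <- Eend. apply to_none.
      * exists (path_end q0 qs). split; [apply end_on_path|].
        rewrite <- Eend. apply to_none.
      * exists (path_end r0 rs). split; [apply end_on_path|].
        rewrite Ey. apply to_none.
  - intros H p0 ps q0 qs r0 rs T.
    destruct T as [Gp [Gq [Gr [Epq [Er Eend]]]]].
    destruct (H (Some p0) (map Some ps) (Some q0) (map Some qs) (Some r0) (map Some rs))
      as [T1 [T2 T3]].
    { repeat split; try (apply geod_up; auto); rewrite ?path_end_map; congruence. }
    repeat split; intros v Hv.
    * destruct (T1 (Some v) (on_path_map' _ _ _ Hv)); [left; eapply out_down|right; eapply in_down]; eauto.
    * destruct (T2 (Some v) (on_path_map' _ _ _ Hv)); [left; eapply out_down|right; eapply in_down]; eauto.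
    * destruct (T3 (Some v) (on_path_map' _ _ _ Hv)); [left; eapply out_down|right; eapply in_down]; eauto.
Qed.
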